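(* Let a partial coloring of an $n\times n$ square $A$ uniquely extend to $L(n,2n-2)$. Then there are no three distinct rows $i_1,i_2,i_3$ and three distinct columns $j_1,j_2,j_3$ such that either (a) the five entries $(i_1,j_1),(i_1,j_2),(i_2,j_2),(i_2,j_3),(i_3,j_3)$ are all uncolored; or (b) the five entries $(i_1,j_1),(i_2,j_1),(i_2,j_2),(i_3,j_2),(i_3,j_3)$ are all uncolored.
   Context: For positive integers $n,k$, let $\mathcal{L}_{n,k}$ be the set of $n\times n$ squares all of whose entries are colored with colors from a fixed set of $k$ colors $\{1,\dots,k\}$ such that any two entries in the same row, or in the same column, have different colors. Entries are indexed $(i,j)$, $i$ the row and $j$ the column. A partial coloring of an $n\times n$ square assigns colors from $\{1,\dots,k\}$ to some of its entries; the remaining entries are called uncolored. A partial coloring extends to $L(n,k)$ if the uncolored entries can be colored so that the resulting fully colored square lies in $\mathcal{L}_{n,k}$ (keeping the given colors), and it uniquely extends to $L(n,k)$ if there is exactly one such way. *)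

(* Defs.v *)
From mathcomp Require Import all_boot.
Set Implicit Arguments. Unset Strict Implicit. Unset Printing Implicit Defensive.

Definition coloring (n k : nat) := {ffun 'I_n * 'I_n -> 'I_k}.

Definition pcoloring (n k : nat) := {ffun 'I_n * 'I_n -> option 'I_k}.

Definition in_L (n k : nat) (L : coloring n k) : Prop :=
  (forall i j j', j != j' -> L (i, j) != L (i, j')) /\
  (forall i i' j, i != i' -> L (i, j) != L (i', j)).

Definition extends_to (n k : nat) (P : pcoloring n k) (L : coloring n k) : Prop :=
  forall i j c, P (i, j) = Some c -> L (i, j) = c.

Definition extends (n k : nat) (P : pcoloring n k) : Prop :=
  exists L, in_L L /\ extends_to P L.

Definition uniquely_extends (n k : nat) (P : pcoloring n k) : Prop :=
  exists! L : coloring n k, in_L L /\ extends_to P L.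

Definition uncolored (n k : nat) (P : pcoloring n k) (i j : 'I_n) : Prop :=
  P (i, j) = None.

(* Main.v *)
Require Import Defs.
From mathcomp Require Import all_boot zify.
Set Implicit Arguments. Unset Strict Implicit. Unset Printing Implicit Defensive.

Lemma meetE (C : eqType) (p q : pred C) (a D : C) :
  (forall g, p g && q g = (g == a) || (g == D)) ->
  forall x, p x -> q x -> x != a -> x = D.
Proof.
move=> H x px qx xa; have := H x; rewrite px qx (negbTE xa) /=.
by move/esym/eqP.
Qed.

Lemma meetA (C : eqType) (p q : pred C) (a D : C) :
  (forall g, p g && q g = (g == a) || (g == D)) -> p a /\ q a.
Proof. by move=> H; have := H a; rewrite eqxx /= => /andP. Qed.

Lemma meetD (C : eqType) (p q : pred C) (a D : C) :
  (forall g, p g && q g = (g == a) || (g == D)) -> p D /\ q D.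
Proof. by move=> H; have := H D; rewrite eqxx orbT => /andP. Qed.

Lemma caseA (C : eqType) (p0 p1 p2 p3 p4 p5 : pred C)
  (a1 a2 a3 a4 a5 D1 D2 D3 D4 D5 c03 c14 c25 c05 : C) :
  (forall g, p0 g && p1 g = (g == a1) || (g == D1)) ->
  (forall g, p1 g && p2 g = (g == a2) || (g == D2)) ->
  (forall g, p2 g && p3 g = (g == a3) || (g == D3)) ->
  (forall g, p3 g && p4 g = (g == a4) || (g == D4)) ->
  (forall g, p4 g && p5 g = (g == a5) || (g == D5)) ->
  (forall g, p1 g || p2 g) ->
  (forall g, p3 g || p4 g) ->
  p0 c03 -> p3 c03 -> p1 c14 -> p4 c14 -> p2 c25 -> p5 c25 -> p0 c05 -> p5 c05 ->
  a1 != c03 -> a1 != c05 -> c03 != c05 ->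
  a1 != a2 -> a1 != c14 -> a2 != c14 ->
  a2 != a3 -> a2 != c25 -> a3 != c25 ->
  a3 != a4 -> a3 != c03 -> a4 != c03 ->
  a4 != a5 -> a4 != c14 -> a5 != c14 ->
  a5 != c25 -> a5 != c05 -> c25 != c05 ->
  (D1 = a2 \/ D2 = a1) -> (D2 = a3 \/ D3 = a2) ->
  (D3 = a4 \/ D4 = a3) -> (D4 = a5 \/ D5 = a4) ->
  c14 = D2 -> False.
Proof.
move=> I1 I2 I3 I4 I5 C2 C4 P03 Q03 P14 Q14 P25 Q25 P05 Q05
  n1 n2 n3 n4 n5 n6 n7 n8 n9 n10 n11 n12 n13 n14 n15 n16 n17 n18 S1 S2 S3 S4 E14.
have s1 : D1 = a2.
  case: S1 => // E; by move: n5; rewrite E14 E eqxx.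
have [_ p2a2] := meetA I2.
have p2c03 : p2 c03.
  case/orP: (C2 c03) => // p1c.
  have := meetE I1 P03 p1c; rewrite eq_sym n1 s1 => /(_ isT) ->; exact p2a2.
have s2 : c03 = D3 by apply: (meetE I3 p2c03 Q03); rewrite eq_sym.
have s3 : D4 = a3.
  case: S3 => // E; by move: n12; rewrite s2 E eqxx.
have [_ p4a3] := meetD I4; rewrite s3 in p4a3.
have s4 : c05 = D5.
  suff p4c : p4 c05 by apply: (meetE I5 p4c Q05); rewrite eq_sym.
  case/orP: (C4 c05) => // p3c.
  case/orP: (C2 c05) => p12.
  - have E : c05 = a2 by rewrite -s1; apply: (meetE I1 P05 p12); rewrite eq_sym.
    have := meetE I3 _ p3c; rewrite E => /(_ p2a2); rewrite n7 => /(_ isT) E2.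
    by move: n3; rewrite s2 -E2 E eqxx.
  - case: (eqVneq c05 a3) => [->//|ne].
    have E2 := meetE I3 p12 p3c ne.
    by move: n3; rewrite s2 -E2 eqxx.
have s5 : c25 = D3.
  case/orP: (C4 c25) => h.
  - by apply: (meetE I3 P25 h); rewrite eq_sym.
  - have E : c25 = D5 by apply: (meetE I5 h Q25); rewrite eq_sym.
    by move: n18; rewrite E s4 eqxx.
have s6 : D2 = a3.
  case: S2 => // E; by move: n8; rewrite s5 E eqxx.
have s7 : D5 = a4.
  case: S4 => // E; by move: n15; rewrite E14 s6 -s3 E eqxx.
have [p3a4 _] := meetA I4.
have p0a4 : p0 a4 by rewrite -s7 -s4.
case/orP: (C2 a4) => h.
- have E : a4 = D1.
    apply: (meetE I1 p0a4 h); by rewrite -s7 -s4 eq_sym.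
  rewrite s1 in E.
  have := meetE I3 _ p3a4; rewrite E => /(_ p2a2); rewrite n7 => /(_ isT) E2.
  by move: n8; rewrite s5 -E2 eqxx.
- have E := meetE I3 h p3a4; rewrite eq_sym n10 in E.
  by move: n12; rewrite -s2 in E; rewrite E // eqxx.
Qed.

Lemma core (C : eqType) (p0 p1 p2 p3 p4 p5 : pred C)
  (a1 a2 a3 a4 a5 D1 D2 D3 D4 D5 c03 c14 c25 c05 : C) :
  (forall g, p0 g && p1 g = (g == a1) || (g == D1)) ->
  (forall g, p1 g && p2 g = (g == a2) || (g == D2)) ->
  (forall g, p2 g && p3 g = (g == a3) || (g == D3)) ->
  (forall g, p3 g && p4 g = (g == a4) || (g == D4)) ->
  (forall g, p4 g && p5 g = (g == a5) || (g == D5)) ->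
  (forall g, p1 g || p2 g) ->
  (forall g, p2 g || p3 g) ->
  (forall g, p3 g || p4 g) ->
  p0 c03 -> p3 c03 -> p1 c14 -> p4 c14 -> p2 c25 -> p5 c25 -> p0 c05 -> p5 c05 ->
  a1 != c03 -> a1 != c05 -> c03 != c05 ->
  a1 != a2 -> a1 != c14 -> a2 != c14 ->
  a2 != a3 -> a2 != c25 -> a3 != c25 ->
  a3 != a4 -> a3 != c03 -> a4 != c03 ->
  a4 != a5 -> a4 != c14 -> a5 != c14 ->
  a5 != c25 -> a5 != c05 -> c25 != c05 ->
  (D1 = a2 \/ D2 = a1) -> (D2 = a3 \/ D3 = a2) ->
  (D3 = a4 \/ D4 = a3) -> (D4 = a5 \/ D5 = a4) -> False.
Proof.
move=> I1 I2 I3 I4 I5 C2 C3 C4 P03 Q03 P14 Q14 P25 Q25 P05 Q05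
  n1 n2 n3 n4 n5 n6 n7 n8 n9 n10 n11 n12 n13 n14 n15 n16 n17 n18 S1 S2 S3 S4.
case/orP: (C3 c14) => h.
- apply: (caseA I1 I2 I3 I4 I5 C2 C4 P03 Q03 P14 Q14 P25 Q25 P05 Q05
    n1 n2 n3 n4 n5 n6 n7 n8 n9 n10 n11 n12 n13 n14 n15 n16 n17 n18 S1 S2 S3 S4).
  by apply: (meetE I2 P14 h); rewrite eq_sym.
- have E : c14 = D4 by apply: (meetE I4 h Q14); rewrite eq_sym.
  apply: (@caseA C p5 p4 p3 p2 p1 p0 a5 a4 a3 a2 a1 D5 D4 D3 D2 D1 c25 c14 c03 c05)
    => //; try by rewrite eq_sym.
  + by move=> g; rewrite andbC I5.
  + by move=> g; rewrite andbC I4.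
  + by move=> g; rewrite andbC I3.
  + by move=> g; rewrite andbC I2.
  + by move=> g; rewrite andbC I1.
  + by move=> g; rewrite orbC C4.
  + by move=> g; rewrite orbC C2.
  + by case: S4 => ?; [right|left].
  + by case: S3 => ?; [right|left].
  + by case: S2 => ?; [right|left].
  + by case: S1 => ?; [right|left].
Qed.

Definition rowp n k (L : coloring n k) (i : 'I_n) : pred 'I_k :=
  fun c => [exists j, L (i, j) == c].
Definition colp n k (L : coloring n k) (j : 'I_n) : pred 'I_k :=
  fun c => [exists i, L (i, j) == c].

Lemma rowpL n k (L : coloring n k) i j : rowp L i (L (i, j)).
Proof. by apply/existsP; exists j. Qed.
Lemma colpL n k (L : coloring n k) i j : colp L j (L (i, j)).
Proof. by apply/existsP; exists i. Qed.

Lemma inL_adj n k (L : coloring n k) : in_L L ->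
  forall x y : 'I_n * 'I_n, x != y -> (x.1 == y.1) || (x.2 == y.2) -> L x != L y.
Proof.
case=> Hr Hc [i j] [i' j'] /= ne /orP[/eqP E|/eqP E]; subst.
- by apply: Hr; apply: contraNneq ne => ->.
- by apply: Hc; apply: contraNneq ne => ->.
Qed.

Lemma adj_inL n k (L : coloring n k) :
  (forall x y : 'I_n * 'I_n, x != y -> (x.1 == y.1) || (x.2 == y.2) -> L x != L y) ->
  in_L L.
Proof.
move=> H; split.
- move=> i j j' ne; apply: H; last by rewrite /= eqxx.
  by rewrite xpair_eqE eqxx.
- move=> i i' j ne; apply: H; last by rewrite /= eqxx orbT.
  by rewrite xpair_eqE eqxx andbT.
Qed.

Lemma neq_row n k (L : coloring n k) : in_L L -> forall i j j', j != j' -> L (i, j) != L (i, j').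
Proof. by case. Qed.
Lemma neq_col n k (L : coloring n k) : in_L L -> forall i i' j, i != i' -> L (i, j) != L (i', j).
Proof. by case. Qed.


Lemma cover_uc n k (P : pcoloring n k) (L : coloring n k) :
  in_L L -> extends_to P L ->
  (forall L', in_L L' /\ extends_to P L' -> L = L') ->
  forall i j, P (i, j) = None -> forall c, rowp L i c || colp L j c.
Proof.
move=> HL HE Hu i j Hn c; apply/negPn/negP; rewrite negb_or => /andP[nr nc].
pose L' : coloring n k := [ffun x => if x == (i, j) then c else L x].
have E : L = L'.
  apply: Hu; split.
  - apply: adj_inL => -[x1 x2] [y1 y2] nxy hl; rewrite !ffunE.
    case: (eqVneq (x1, x2) (i, j)) => [ex|nx]; case: (eqVneq (y1, y2) (i, j)) => [ey|ny].
    + by move: nxy; rewrite ex ey eqxx.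
    + case: ex => ??; subst; move: hl => /= /orP[/eqP <-|/eqP <-].
      * by apply: contra nr => /eqP ->; apply: rowpL.
      * by apply: contra nc => /eqP ->; apply: colpL.
    + case: ey => ??; subst; move: hl => /= /orP[/eqP ->|/eqP ->].
      * by rewrite eq_sym; apply: contra nr => /eqP ->; apply: rowpL.
      * by rewrite eq_sym; apply: contra nc => /eqP ->; apply: colpL.
    + exact: inL_adj.
  - move=> i0 j0 c0 h; rewrite ffunE; case: eqP => [E|_]; last exact: HE.
    by move: h; rewrite E Hn.
have := congr1 (fun f : coloring n k => f (i, j)) E; rewrite /= ffunE eqxx => Ec.
by move: nr; rewrite -Ec rowpL.
Qed.

Lemma inter n (L : coloring n (2 * n - 2)) i j :
  in_L L -> (forall c, rowp L i c || colp L j c) ->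
  exists D, forall g, rowp L i g && colp L j g = (g == L (i, j)) || (g == D).
Proof.
move=> HL Hc.
pose R := [set g | rowp L i g]; pose Cs := [set g | colp L j g].
have cR : #|R| = n.
  have -> : R = (fun j0 => L (i, j0)) @: setT.
    apply/setP => g; rewrite inE; apply/existsP/imsetP => [[j0 /eqP <-]|[j0 _ ->]];
      by exists j0.
  rewrite card_imset ?cardsT ?card_ord // => j1 j2 E.
  by case: (eqVneq j1 j2) => // ne; move: (neq_row HL i ne); rewrite E eqxx.
have cC : #|Cs| = n.
  have -> : Cs = (fun i0 => L (i0, j)) @: setT.
    apply/setP => g; rewrite inE; apply/existsP/imsetP => [[j0 /eqP <-]|[j0 _ ->]];
      by exists j0.
  rewrite card_imset ?cardsT ?card_ord // => j1 j2 E.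
  by case: (eqVneq j1 j2) => // ne; move: (neq_col HL j ne); rewrite E eqxx.
have cU : #|R :|: Cs| = 2 * n - 2.
  have -> : R :|: Cs = setT by apply/setP => g; rewrite !inE Hc.
  by rewrite cardsT card_ord.
have n0 : 0 < n by apply: leq_ltn_trans (ltn_ord i).
have h := cardsUI R Cs; rewrite cU cR cC in h.
have c2 : #|R :&: Cs| == 2 by apply/eqP; lia.
case/cards2P: c2 => x [y [nxy E]].
have Le : L (i, j) \in R :&: Cs by rewrite !inE rowpL colpL.
exists (if x == L (i, j) then y else x) => g.
have : (g \in R :&: Cs) = (g == x) || (g == y) by rewrite E !inE.
rewrite !inE => ->.
case: (eqVneq x (L (i, j))) => [->//|nx].
move: Le; rewrite E !inE => /orP[/eqP Ex|/eqP Ey].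
  by move: nx; rewrite Ex eqxx.
by rewrite -Ey orbC.
Qed.

Lemma dup n k (L : coloring n k) (HL : in_L L) (e z f : 'I_n * 'I_n) :
  z != f -> (z.1 == e.1) || (z.2 == e.2) -> (f.1 == e.1) || (f.2 == e.2) ->
  L z = L f -> rowp L e.1 (L f) && colp L e.2 (L f).
Proof.
case: e z f => [e1 e2] [z1 z2] [f1 f2] /= nzf hz hf Ez.
case/orP: hz => /eqP hz; case/orP: hf => /eqP hf; subst.
- by have := inL_adj HL nzf; rewrite /= eqxx Ez eqxx => /(_ isT).
- by rewrite -Ez rowpL /= Ez colpL.
- by rewrite rowpL -Ez colpL.
- by have := inL_adj HL nzf; rewrite /= eqxx orbT Ez eqxx => /(_ isT).
Qed.

Lemma swap_fact n k (P : pcoloring n k) (L : coloring n k) :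
  in_L L -> extends_to P L ->
  (forall L', in_L L' /\ extends_to P L' -> L = L') ->
  forall (e f : 'I_n * 'I_n) De Df, P e = None -> P f = None -> e != f ->
  (e.1 == f.1) || (e.2 == f.2) ->
  (forall g, rowp L e.1 g && colp L e.2 g = (g == L e) || (g == De)) ->
  (forall g, rowp L f.1 g && colp L f.2 g = (g == L f) || (g == Df)) ->
  De = L f \/ Df = L e.
Proof.
move=> HL HE Hu e f De Df Pe Pf nef hef Ie If.
case: (eqVneq De (L f)) => [->|ndf]; [by left|].
case: (eqVneq Df (L e)) => [->|nde]; [by right|].
exfalso.
have Lef : L e != L f by exact: inL_adj.
have Lfe : L f != L e by rewrite eq_sym.
have ndf' : L f != De by rewrite eq_sym.
have nde' : L e != Df by rewrite eq_sym.
have ce : forall z, z != f -> (z.1 == e.1) || (z.2 == e.2) -> L z != L f.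
  move=> z nzf hz; apply/eqP => Ez.
  have := dup HL nzf hz _ Ez; rewrite Ie (negbTE Lfe) (negbTE ndf') /=.
  have hfe : (f.1 == e.1) || (f.2 == e.2) by case/orP: hef => /eqP ->; rewrite eqxx ?orbT.
  by move/(_ hfe).
have cf : forall z, z != e -> (z.1 == f.1) || (z.2 == f.2) -> L z != L e.
  move=> z nze hz; apply/eqP => Ez.
  have := dup HL nze hz _ Ez; rewrite If (negbTE Lef) (negbTE nde') /=.
  have hfe : (e.1 == f.1) || (e.2 == f.2) by [].
  by move/(_ hfe).
pose L' : coloring n k := [ffun x => if x == e then L f else if x == f then L e else L x].
have E : L = L'.
  apply: Hu; split.
  - apply: adj_inL => x y nxy hl; rewrite !ffunE.
    case: (eqVneq x e) => [xe|nxe]; case: (eqVneq y e) => [ye|nye].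
    + by move: nxy; rewrite xe ye eqxx.
    + subst x; case: (eqVneq y f) => [yf|nyf].
        by rewrite eq_sym.
      by rewrite eq_sym; apply: ce => //; rewrite eq_sym [y.2 == _]eq_sym.
    + subst y; case: (eqVneq x f) => [xf|nxf].
        by [].
      by apply: ce => //.
    + case: (eqVneq x f) => [xf|nxf]; case: (eqVneq y f) => [yf|nyf].
      * by move: nxy; rewrite xf yf eqxx.
      * subst x; rewrite eq_sym; apply: cf => //; by rewrite eq_sym [y.2 == _]eq_sym.
      * subst y; by apply: cf.
      * exact: inL_adj.
  - move=> i0 j0 c0 h; rewrite ffunE.
    case: eqP => [E|_]; first by move: h; rewrite E Pe.
    case: eqP => [E|_]; first by move: h; rewrite E Pf.
    exact: HE.
have := congr1 (fun g : coloring n k => g e) E; rewrite /= ffunE eqxx => Ec.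
by move: Lef; rewrite {1}Ec eqxx.
Qed.

Theorem lemma4 (n : nat) (P : pcoloring n (2 * n - 2)) :
  uniquely_extends P ->
  ~ (exists (i1 i2 i3 j1 j2 j3 : 'I_n),
       [/\ i1 != i2, i1 != i3 & i2 != i3] /\
       [/\ j1 != j2, j1 != j3 & j2 != j3] /\
       ((uncolored P i1 j1 /\ uncolored P i1 j2 /\ uncolored P i2 j2 /\
         uncolored P i2 j3 /\ uncolored P i3 j3) \/
        (uncolored P i1 j1 /\ uncolored P i2 j1 /\ uncolored P i2 j2 /\
         uncolored P i3 j2 /\ uncolored P i3 j3))).
Proof.
case=> L [[HL HE] Hu].
move=> [i1 [i2 [i3 [j1 [j2 [j3 [[ni12 ni13 ni23] [[nj12 nj13 nj23] H]]]]]]]].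
have cv := cover_uc HL HE Hu.
have sw := swap_fact HL HE Hu.
have nr := neq_row HL; have nc := neq_col HL.
case: H => [[u1 [u2 [u3 [u4 u5]]]] | [u1 [u2 [u3 [u4 u5]]]]].
- have [D1 I1] := inter HL (cv _ _ u1).
  have [D2 I2] := inter HL (cv _ _ u2).
  have [D3 I3] := inter HL (cv _ _ u3).
  have [D4 I4] := inter HL (cv _ _ u4).
  have [D5 I5] := inter HL (cv _ _ u5).
  apply: (@core _ (colp L j1) (rowp L i1) (colp L j2) (rowp L i2) (colp L j3) (rowp L i3)
    (L (i1, j1)) (L (i1, j2)) (L (i2, j2)) (L (i2, j3)) (L (i3, j3)) D1 D2 D3 D4 D5
    (L (i2, j1)) (L (i1, j3)) (L (i3, j2)) (L (i3, j1))).
  all: try (by move=> g; rewrite andbC).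
  all: try (by move=> g; rewrite ?I2 ?I4).
  all: try (by move=> g; rewrite ?(cv _ _ u2) ?(cv _ _ u4)).
  all: try (by move=> g; rewrite orbC (cv _ _ u3)).
  all: try (by rewrite ?rowpL ?colpL).
  all: try (by apply: nr; rewrite // eq_sym).
  all: try (by apply: nc; rewrite // eq_sym).
  + apply: (sw (i1, j1) (i1, j2) D1 D2 u1 u2 _ _ I1 I2) => /=; rewrite ?xpair_eqE ?eqxx ?andbT ?orbT //.
  + apply: (sw (i1, j2) (i2, j2) D2 D3 u2 u3 _ _ I2 I3) => /=; rewrite ?xpair_eqE ?eqxx ?andbT ?orbT //.
  + apply: (sw (i2, j2) (i2, j3) D3 D4 u3 u4 _ _ I3 I4) => /=; rewrite ?xpair_eqE ?eqxx ?andbT ?orbT //.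
  + apply: (sw (i2, j3) (i3, j3) D4 D5 u4 u5 _ _ I4 I5) => /=; rewrite ?xpair_eqE ?eqxx ?andbT ?orbT //.
- have [D1 I1] := inter HL (cv _ _ u1).
  have [D2 I2] := inter HL (cv _ _ u2).
  have [D3 I3] := inter HL (cv _ _ u3).
  have [D4 I4] := inter HL (cv _ _ u4).
  have [D5 I5] := inter HL (cv _ _ u5).
  apply: (@core _ (rowp L i1) (colp L j1) (rowp L i2) (colp L j2) (rowp L i3) (colp L j3)
    (L (i1, j1)) (L (i2, j1)) (L (i2, j2)) (L (i3, j2)) (L (i3, j3)) D1 D2 D3 D4 D5
    (L (i1, j2)) (L (i3, j1)) (L (i2, j3)) (L (i1, j3))).
  all: try (by move=> g; rewrite andbC).
  all: try (by move=> g; rewrite ?I1 ?I3 ?I5).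
  all: try (by move=> g; rewrite ?(cv _ _ u3)).
  all: try (by move=> g; rewrite orbC ?(cv _ _ u2) ?(cv _ _ u4)).
  all: try (by rewrite ?rowpL ?colpL).
  all: try (by apply: nr; rewrite // eq_sym).
  all: try (by apply: nc; rewrite // eq_sym).
  + apply: (sw (i1, j1) (i2, j1) D1 D2 u1 u2 _ _ I1 I2) => /=; rewrite ?xpair_eqE ?eqxx ?andbT ?orbT //.
  + apply: (sw (i2, j1) (i2, j2) D2 D3 u2 u3 _ _ I2 I3) => /=; rewrite ?xpair_eqE ?eqxx ?andbT ?orbT //.
  + apply: (sw (i2, j2) (i3, j2) D3 D4 u3 u4 _ _ I3 I4) => /=; rewrite ?xpair_eqE ?eqxx ?andbT ?orbT //.
  + apply: (sw (i3, j2) (i3, j3) D4 D5 u4 u5 _ _ I4 I5) => /=; rewrite ?xpair_eqE ?eqxx ?andbT ?orbT //.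
Qed.
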